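(* Let $N\ge2$, $R>0$, and let $u\in C(B_R,(0,\infty))$ be separable in $B_R$. If $u$ is not radially symmetric with respect to the origin, then there exists $M\in O(N)$ such that: (i) (axial symmetry) for every $\alpha\in(0,R]$ and every $h\in[-\alpha,\alpha]$, $u_M$ is constant on $\{x\in S^{N-1}_\alpha:x_N=h\}$, i.e. $u_M$ is axially symmetric with respect to the $x_N$-axis; (ii) (monotonicity) for every $\alpha\in(0,R]$, the function $\theta\mapsto u_M(0_{N-2},\alpha\cos\theta,\alpha\sin\theta)$ is nonincreasing on $[\pi/2,3\pi/2]$.
   Context: $B_R$ is the closed ball of radius $R$ centered at $0$ in $\mathbb{R}^N$; $S^{N-1}_\alpha$ is the sphere of radius $\alpha$ centered at $0$; $O(N)$ is the orthogonal group and $u_M(x):=u(M^{-1}x)$; $0_k$ is the zero vector of $\mathbb{R}^k$. For an open half-space $H$, $\sigma_H$ is the reflection across $\partial H$. A function $u:B_R\to\mathbb{R}$ is separable in $B_R$ if for every open half-space $H\subset\mathbb{R}^N$ with $0\in\partial H$, either $u(x)\ge u(\sigma_Hx)$ for all $x\in H\cap B_R$, or $u(x)\le u(\sigma_Hx)$ for all $x\in H\cap B_R$. Radially symmetric with respect to the origin means $u(x)=u(y)$ whenever $|x|=|y|$. *)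

(* Defs.v *)
From mathcomp Require Import ssreflect ssrfun ssrbool eqtype ssrnat seq choice fintype bigop.
From Stdlib Require Import Reals.

Set Implicit Arguments.
Unset Strict Implicit.
Unset Printing Implicit Defensive.

Open Scope R_scope.

Definition vec (N : nat) := 'I_N -> R.

Definition dot (N : nat) (x y : vec N) : R :=
  \big[Rplus/0]_(i < N) (x i * y i).

Definition norm (N : nat) (x : vec N) : R := sqrt (dot x x).

Definition inBall (N : nat) (R0 : R) (x : vec N) : Prop := norm x <= R0.

(* k-th coordinate (0-based, as a nat), 0 if out of range *)
Definition coord (N : nat) (x : vec N) (k : nat) : R :=
  match @insub nat (fun k => ltn k N) 'I_N k with
  | Some i => x i
  | None => 0
  end.

Definition reflect_e (N : nat) (e x : vec N) : vec N :=
  fun i => x i - 2 * (dot e x / dot e e) * e i.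

(* u separable in B_R: every open half-space H with 0 in its boundary is
   H = {x | e.x > 0} for some e <> 0. *)
Definition separable (N : nat) (R0 : R) (u : vec N -> R) : Prop :=
  forall e : vec N, (exists i, e i <> 0) ->
    (forall x, inBall R0 x -> dot e x > 0 -> u x >= u (reflect_e e x)) \/
    (forall x, inBall R0 x -> dot e x > 0 -> u x <= u (reflect_e e x)).

Definition radially_symmetric (N : nat) (R0 : R) (u : vec N -> R) : Prop :=
  forall x y, inBall R0 x -> inBall R0 y -> norm x = norm y -> u x = u y.

Definition continuous_on_ball (N : nat) (R0 : R) (u : vec N -> R) : Prop :=
  forall x, inBall R0 x -> forall eps, eps > 0 -> exists delta, delta > 0 /\
    forall y, inBall R0 y -> norm (fun i => y i - x i) < delta ->
      Rabs (u y - u x) < eps.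

(* N x N real matrices, M i j = entry in row i, column j *)
Definition mat (N : nat) := 'I_N -> 'I_N -> R.

Definition orthogonal (N : nat) (M : mat N) : Prop :=
  forall i k : 'I_N,
    \big[Rplus/0]_(j < N) (M j i * M j k) = if i == k then 1 else 0.

(* M^T x, which equals M^{-1} x for M orthogonal *)
Definition mat_tapply (N : nat) (M : mat N) (x : vec N) : vec N :=
  fun i => \big[Rplus/0]_(j < N) (M j i * x j).

Definition u_M (N : nat) (u : vec N -> R) (M : mat N) : vec N -> R :=
  fun x => u (mat_tapply M x).

Definition circ_pt (N : nat) (a t : R) : vec N :=
  fun i => if nat_of_ord i == subn N 2 then a * cos t
           else if nat_of_ord i == subn N 1 then a * sin t else 0.

(* Main.v *)
Require Import Defs.
From HB Require Import structures.
From mathcomp Require Import ssreflect ssrfun ssrbool eqtype ssrnat seq choice fintype bigop zify.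
From Stdlib Require Import Reals Lra Lia Psatz FunctionalExtensionality Classical IndefiniteDescription.
Open Scope R_scope.

Set Implicit Arguments.
Unset Strict Implicit.

Lemma Rplus_assoc' : associative Rplus. Proof. move=> *; rewrite Rplus_assoc; reflexivity. Qed.
HB.instance Definition _ := Monoid.isComLaw.Build R 0 Rplus Rplus_assoc' Rplus_comm Rplus_0_l.

Section Sums.
Variable n : nat.
Implicit Types f g : 'I_n -> R.

Lemma sum_add f g :
  \big[Rplus/0]_(i < n) (f i + g i) = \big[Rplus/0]_(i < n) f i + \big[Rplus/0]_(i < n) g i.
Proof. by rewrite big_split. Qed.

Lemma sum_scal a f :
  \big[Rplus/0]_(i < n) (a * f i) = a * \big[Rplus/0]_(i < n) f i.
Proof.
elim/big_rec2: _ => [|i y1 y2 _ ->]; first by rewrite Rmult_0_r.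
by rewrite Rmult_plus_distr_l.
Qed.

Lemma sum_ext f g : (forall i, f i = g i) ->
  \big[Rplus/0]_(i < n) f i = \big[Rplus/0]_(i < n) g i.
Proof. by move=> H; apply: eq_bigr => i _; apply: H. Qed.

Lemma sum_ge0 f : (forall i, 0 <= f i) -> 0 <= \big[Rplus/0]_(i < n) f i.
Proof.
move=> H; elim/big_rec: _ => [|i y _ Hy]; first lra.
by have := H i; lra.
Qed.

Lemma sum_one f k : (forall i, i != k -> f i = 0) ->
  \big[Rplus/0]_(i < n) f i = f k.
Proof.
move=> H; rewrite (bigD1 k) //= big1; first by rewrite Rplus_0_r.
by move=> i /H.
Qed.

Lemma sum_gt0 f k : (forall i, 0 <= f i) -> 0 < f k -> 0 < \big[Rplus/0]_(i < n) f i.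
Proof.
move=> H Hk; rewrite (bigD1 k) //=.
apply: (Rlt_le_trans _ (f k + 0)); first lra.
apply: Rplus_le_compat_l.
by elim/big_rec: _ => [|i y _ Hy]; [lra| have := H i; lra].
Qed.

Lemma sum_two f k1 k2 : k1 != k2 -> (forall i, i != k1 -> i != k2 -> f i = 0) ->
  \big[Rplus/0]_(i < n) f i = f k1 + f k2.
Proof.
move=> Hne H; rewrite (bigD1 k1) //=.
rewrite (bigD1 k2) /=; last by rewrite eq_sym.
rewrite big1; first by rewrite Rplus_0_r.
by move=> i /andP [] H1 H2; apply: H.
Qed.
End Sums.

Definition vadd N (x y : vec N) : vec N := fun i => x i + y i.
Definition vsub N (x y : vec N) : vec N := fun i => x i - y i.
Definition vscal N (a : R) (x : vec N) : vec N := fun i => a * x i.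
Definition vopp N (x : vec N) : vec N := fun i => - x i.
Definition nz N (x : vec N) := exists i, x i <> 0.

Section Dot.
Variable N : nat.
Implicit Types x y z e : vec N.

Lemma dot_sym x y : dot x y = dot y x.
Proof. by apply: sum_ext => i; rewrite Rmult_comm. Qed.

Lemma dot_addl x y z : dot (vadd x y) z = dot x z + dot y z.
Proof. rewrite /dot -sum_add; apply: sum_ext => i; rewrite /vadd; ring. Qed.
Lemma dot_addr x y z : dot z (vadd x y) = dot z x + dot z y.
Proof. by rewrite dot_sym dot_addl !(dot_sym z). Qed.
Lemma dot_scall a x y : dot (vscal a x) y = a * dot x y.
Proof. rewrite /dot -sum_scal; apply: sum_ext => i; rewrite /vscal; ring. Qed.
Lemma dot_scalr a x y : dot y (vscal a x) = a * dot y x.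
Proof. by rewrite dot_sym dot_scall dot_sym. Qed.
Lemma dot_oppl x y : dot (vopp x) y = - dot x y.
Proof.
transitivity (-1 * dot x y); last ring.
rewrite -dot_scall; apply: sum_ext => i; rewrite /vopp /vscal; ring.
Qed.
Lemma dot_oppr x y : dot y (vopp x) = - dot y x.
Proof. by rewrite dot_sym dot_oppl dot_sym. Qed.
Lemma vsub_addopp x y : vsub x y = vadd x (vopp y).
Proof. by apply: functional_extensionality => i; rewrite /vsub /vadd /vopp. Qed.
Lemma dot_subl x y z : dot (vsub x y) z = dot x z - dot y z.
Proof. by rewrite vsub_addopp dot_addl dot_oppl. Qed.
Lemma dot_subr x y z : dot z (vsub x y) = dot z x - dot z y.
Proof. by rewrite dot_sym dot_subl !(dot_sym z). Qed.

Lemma dot_ge0 x : 0 <= dot x x.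
Proof. apply: sum_ge0 => i; nra. Qed.

Lemma dot_gt0 x : nz x -> 0 < dot x x.
Proof. case=> k Hk; apply: (sum_gt0 (k:=k)) => [i|]; nra. Qed.

Lemma dot_eq0 x : dot x x = 0 -> x = fun _ => 0.
Proof.
move=> H; apply: functional_extensionality => i.
apply: NNPP => Hi; have := dot_gt0 (ex_intro _ i Hi); lra.
Qed.

Lemma nz_dot x : nz x <-> dot x x <> 0.
Proof.
split; first by move/dot_gt0; lra.
move=> H; apply: NNPP => Hn; apply: H.
rewrite /dot big1 // => i _; case: (Req_dec (x i) 0) => [->|Hi]; first ring.
by case: Hn; exists i.
Qed.
End Dot.

Set Implicit Arguments.
Unset Strict Implicit.

Section Refl.
Variable N : nat.
Implicit Types x y z e : vec N.

Lemma refl_def e x : reflect_e e x = vsub x (vscal (2 * (dot e x / dot e e)) e).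
Proof. by []. Qed.

Lemma dot_refll e x y : dot (reflect_e e x) y = dot x y - 2 * (dot e x / dot e e) * dot e y.
Proof. by rewrite refl_def dot_subl dot_scall. Qed.
Lemma dot_reflr e x y : dot y (reflect_e e x) = dot y x - 2 * (dot e x / dot e e) * dot y e.
Proof. by rewrite refl_def dot_subr dot_scalr. Qed.

Lemma dot_e_refl e x : nz e -> dot e (reflect_e e x) = - dot e x.
Proof. move=> /nz_dot H; rewrite dot_reflr; field; exact H. Qed.

Lemma refl_dot e x y : dot (reflect_e e x) (reflect_e e y) = dot x y.
Proof.
case: (Req_dec (dot e e) 0) => H.
- have E0 := dot_eq0 H.
  have Ex : forall w, reflect_e e w = w.
    move=> w; apply: functional_extensionality => i; rewrite /reflect_e E0; ring.
  by rewrite !Ex.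
- rewrite dot_refll !dot_reflr (dot_sym x e) ?(dot_sym y e); field; exact H.
Qed.

Lemma refl_invol e x : reflect_e e (reflect_e e x) = x.
Proof.
case: (Req_dec (dot e e) 0) => H.
- have E0 := dot_eq0 H.
  by apply: functional_extensionality => i; rewrite /reflect_e E0; ring.
- apply: functional_extensionality => i.
  have := dot_reflr e x e; rewrite /reflect_e => ->.
  field; exact H.
Qed.

Lemma refl_scal a e x : a <> 0 -> reflect_e (vscal a e) x = reflect_e e x.
Proof.
move=> Ha; case: (Req_dec (dot e e) 0) => H.
- have E0 := dot_eq0 H.
  apply: functional_extensionality => i; rewrite /reflect_e /vscal E0; ring.
- apply: functional_extensionality => i; rewrite /reflect_e /vscal.
  rewrite !dot_scall !dot_scalr; field; split; auto.
Qed.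

Lemma refl_opp e x : reflect_e (vopp e) x = reflect_e e x.
Proof.
have -> : vopp e = vscal (-1) e.
  by apply: functional_extensionality => i; rewrite /vopp /vscal; ring.
by apply: refl_scal; lra.
Qed.

Lemma norm_refl e x : norm (reflect_e e x) = norm x.
Proof. by rewrite /norm refl_dot. Qed.

Lemma refl_swap x y : dot x x = dot y y -> nz (vsub x y) ->
  reflect_e (vsub x y) x = y /\ 0 < dot (vsub x y) x.
Proof.
move=> Hxy Hnz; have Hp := dot_gt0 Hnz.
have Ee : dot (vsub x y) (vsub x y) = 2 * (dot x x - dot x y).
  rewrite !dot_subl !dot_subr (dot_sym y x); lra.
have Ex : dot (vsub x y) x = dot x x - dot x y by rewrite dot_subl dot_sym.
split; last lra.
apply: functional_extensionality => i; rewrite /reflect_e Ee Ex /vsub.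
field; lra.
Qed.

Lemma dot_vsub_y x y : dot x x = dot y y -> dot (vsub x y) y = - dot (vsub x y) x.
Proof. move=> H; rewrite !dot_subl (dot_sym y x); lra. Qed.
End Refl.

Set Implicit Arguments.
Unset Strict Implicit.

Section Good.
Variable N : nat.
Variable R0 : R.
Variable u : vec N -> R.
Implicit Types x y z e : vec N.

Definition G e := forall x, inBall R0 x -> dot e x > 0 -> u (reflect_e e x) <= u x.
Definition Zs e := nz e /\ G e /\ G (vopp e).

Lemma inBall_refl e x : inBall R0 x -> inBall R0 (reflect_e e x).
Proof. by rewrite /inBall norm_refl. Qed.

Lemma sep_G : separable R0 u -> forall e, nz e -> G e \/ G (vopp e).
Proof.
move=> Hs e He; case: (Hs e He) => H; [left|right].
- by move=> x Hx Hp; have := H x Hx Hp; lra.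
- move=> x Hx Hp; rewrite refl_opp.
  have Hy := inBall_refl e Hx.
  have Hq : dot e (reflect_e e x) > 0.
    by rewrite dot_e_refl // -dot_oppl; lra.
  by have := H _ Hy Hq; rewrite refl_invol.
Qed.

Lemma G_scal a e : a > 0 -> G e -> G (vscal a e).
Proof.
move=> Ha H x Hx; rewrite dot_scall refl_scal; last lra.
move=> Hp; apply: H => //.
apply: (Rmult_lt_reg_l a); lra.
Qed.

Lemma vopp_opp e : vopp (vopp e) = e.
Proof. by apply: functional_extensionality => i; rewrite /vopp Ropp_involutive. Qed.

Lemma vscal_neg a e : vscal a e = vscal (- a) (vopp e).
Proof. by apply: functional_extensionality => i; rewrite /vscal /vopp; ring. Qed.

Lemma vopp_scal a e : vopp (vscal a e) = vscal a (vopp e).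
Proof. by apply: functional_extensionality => i; rewrite /vscal /vopp; ring. Qed.

Lemma nz_scal a e : a <> 0 -> nz e -> nz (vscal a e).
Proof. move=> Ha [i Hi]; exists i; rewrite /vscal; apply: Rmult_integral_contrapositive; tauto. Qed.

Lemma Zs_scal a e : a <> 0 -> Zs e -> Zs (vscal a e).
Proof.
move=> Ha [Hn [H1 H2]]; split; first exact: nz_scal.
case: (Rlt_le_dec 0 a) => Ha'.
- by split; [apply: G_scal | rewrite vopp_scal; apply: G_scal].
- rewrite vscal_neg vopp_scal vopp_opp; split; apply: G_scal => //; lra.
Qed.

Lemma Zs_opp e : Zs e -> Zs (vopp e).
Proof.
move=> [[i Hi] [H1 H2]]; split; last by rewrite vopp_opp.
by exists i; rewrite /vopp; lra.
Qed.

Lemma Zs_sym e : Zs e -> forall x, inBall R0 x -> u (reflect_e e x) = u x.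
Proof.
move=> [Hn [H1 H2]] x Hx.
have Hy := inBall_refl e Hx.
case: (Rtotal_order (dot e x) 0) => [Hneg|[H0|Hpos]].
- have Hp : dot (vopp e) x > 0 by rewrite dot_oppl; lra.
  have A1 := H2 x Hx Hp; rewrite refl_opp in A1.
  have Hq : dot e (reflect_e e x) > 0 by rewrite dot_e_refl //; lra.
  have A2 := H1 _ Hy Hq; rewrite refl_invol in A2; lra.
- apply: f_equal; apply: functional_extensionality => i.
  by rewrite /reflect_e H0 /Rdiv Rmult_0_l; ring.
- have A1 := H1 x Hx Hpos.
  have Hq : dot (vopp e) (reflect_e e x) > 0 by rewrite dot_oppl dot_e_refl //; lra.
  have A2 := H2 _ Hy Hq; rewrite refl_opp refl_invol in A2; lra.
Qed.

Lemma nonradial_V : separable R0 u -> ~ radially_symmetric R0 u ->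
  exists v, nz v /\ G v /\ ~ G (vopp v).
Proof.
move=> Hs Hr.
have [x [y [Hx [Hy [Hn Hu]]]]] : exists x y, inBall R0 x /\ inBall R0 y /\ norm x = norm y /\ u y < u x.
  apply: NNPP => Hc; apply: Hr => x y Hx Hy Hn.
  case: (Rtotal_order (u x) (u y)) => [H|[H|H]] //; exfalso; apply: Hc.
  - by exists y, x; repeat split => //.
  - by exists x, y.
have Hd : dot x x = dot y y.
  by move: Hn; rewrite /norm => Hn; rewrite -(sqrt_sqrt (dot x x)) ?Hn ?sqrt_sqrt //; apply: dot_ge0.
have Hnz : nz (vsub x y).
  apply: NNPP => Hc; have Exy : x = y.
    apply: functional_extensionality => i; apply: NNPP => Hi; apply: Hc; exists i.
    by rewrite /vsub; lra.
  by rewrite Exy in Hu; lra.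
have [Hr1 Hr2] := refl_swap Hd Hnz.
exists (vsub x y); split => //.
have NG : ~ G (vopp (vsub x y)).
  move=> HG.
  have Hp : dot (vopp (vsub x y)) y > 0 by rewrite dot_oppl dot_vsub_y //; lra.
  have := HG y Hy Hp; rewrite refl_opp.
  have -> : reflect_e (vsub x y) y = x by rewrite -{2}Hr1 refl_invol.
  lra.
split => //; case: (sep_G Hs Hnz) => //.
Qed.

End Good.

Set Implicit Arguments.
Unset Strict Implicit.

Section Closed.
Variable N : nat.
Variable R0 : R.
Variable u : vec N -> R.
Implicit Types x y z e A B P Q w : vec N.

Definition path A B (s : R) : vec N := vadd A (vscal s B).

Lemma dot_path_l A B s y : dot (path A B s) y = dot A y + s * dot B y.
Proof. by rewrite /path dot_addl dot_scall. Qed.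

Lemma dot_path_path A B s :
  dot (path A B s) (path A B s) = dot A A + 2 * s * dot A B + s * s * dot B B.
Proof.
rewrite !dot_path_l /path !dot_addr !dot_scalr (dot_sym B A); ring.
Qed.

Lemma vsub_vsub x P Q : vsub (vsub x P) (vsub x Q) = vsub Q P.
Proof. by apply: functional_extensionality => i; rewrite /vsub; ring. Qed.

Lemma dot_vsub_self P Q : dot (vsub Q P) (vsub Q P) = dot Q Q - 2 * dot Q P + dot P P.
Proof. rewrite !dot_subl !dot_subr (dot_sym P Q); ring. Qed.

Lemma norm_lt_sq w d : 0 < d -> dot w w < d * d -> norm w < d.
Proof.
move=> Hd H; rewrite /norm.
rewrite -(sqrt_square d); last lra.
apply: sqrt_lt_1_alt; split => //; apply: dot_ge0.
Qed.

Lemma G_closed A B T : continuous_on_ball R0 u ->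
  (forall eps, eps > 0 -> exists s, Rabs (s - T) < eps /\ G R0 u (path A B s)) ->
  G R0 u (path A B T).
Proof.
move=> Hc Hap x Hx Hq.
apply: Rnot_lt_le => Hlt.
set eT := path A B T in Hq Hlt *.
set y := reflect_e eT x in Hlt.
have Hy : inBall R0 y by apply: inBall_refl.
have [d [Hd Hdall]] := Hc y Hy (u y - u x) ltac:(lra).
set qT := dot eT x in Hq *.
have HnT : dot eT eT <> 0.
  move=> H0; have E0 := dot_eq0 H0; move: Hq; rewrite /qT E0 /dot big1 //; first lra.
  by move=> i _; ring.
have HnTp : 0 < dot eT eT by have := dot_ge0 eT; lra.
set phT := qT / dot eT eT.
set a0 := dot A x. set a1 := dot B x.
set c0 := dot A A. set c1 := dot A B. set c2 := dot B B.
set m0 := dot A eT. set m1 := dot B eT.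
set F := fun s => 4 * ((a0 + s * a1) * (a0 + s * a1) - 2 * (a0 + s * a1) * phT * (m0 + s * m1))
                 / (c0 + 2 * s * c1 + s * s * c2) + 4 * phT * phT * dot eT eT.
have EnT : dot eT eT = c0 + 2 * T * c1 + T * T * c2 by rewrite /eT dot_path_path.
have EqT : qT = a0 + T * a1 by rewrite /qT /eT dot_path_l.
have EmT : dot eT eT = m0 + T * m1 by rewrite {1}/eT dot_path_l.
have Hcont : continuity_pt F T.
  rewrite /F; reg; rewrite -EnT; exact HnT.
have FT0 : F T = 0.
  rewrite /F -EnT -EqT -EmT /phT; field; exact HnT.
have [al [Hal Halall]] := Hcont (d * d) ltac:(nra).
set eta := Rmin al (qT / (2 * (Rabs a1 + 1))).
have Ha1 : 0 < Rabs a1 + 1 by have := Rabs_pos a1; lra.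
have Heta : eta > 0.
  apply: Rmin_pos => //; apply: Rdiv_lt_0_compat; lra.
have [s [Hs HGs]] := Hap eta Heta.
have Hsal : Rabs (s - T) < al by apply: (Rlt_le_trans _ eta) => //; apply: Rmin_l.
have Hsq : Rabs (s - T) < qT / (2 * (Rabs a1 + 1)).
  by apply: (Rlt_le_trans _ eta) => //; apply: Rmin_r.
have Hqs : dot (path A B s) x > 0.
  rewrite dot_path_l -/a0 -/a1.
  have H1 : Rabs ((s - T) * a1) <= Rabs (s - T) * (Rabs a1 + 1).
    rewrite Rabs_mult; apply: Rmult_le_compat_l; [apply: Rabs_pos|lra].
  have H2 : Rabs (s - T) * (Rabs a1 + 1) < qT / 2.
    apply: (Rmult_lt_reg_r (/ (Rabs a1 + 1))); first by apply: Rinv_0_lt_compat.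
    rewrite Rmult_assoc Rinv_r; last lra.
    move: Hsq; rewrite Rmult_1_r /Rdiv Rinv_mult; lra.
  have H3 := Rle_abs (- ((s - T) * a1)); rewrite Rabs_Ropp in H3.
  have : qT = a0 + T * a1 by []. nra.
have Hns : dot (path A B s) (path A B s) <> 0.
  move=> H0; have E0 := dot_eq0 H0; move: Hqs; rewrite E0 /dot big1 //; first lra.
  by move=> i _; ring.
have HGx := HGs x Hx Hqs.
set w := reflect_e (path A B s) x in HGx.
have Hw : inBall R0 w by apply: inBall_refl.
have HFs : dot (vsub w y) (vsub w y) = F s.
  rewrite /w /y !refl_def vsub_vsub dot_vsub_self !dot_scall !dot_scalr.
  rewrite dot_path_path dot_path_l.
  have -> : dot eT (path A B s) = m0 + s * m1 by rewrite dot_sym dot_path_l.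
  rewrite -/a0 -/a1 -/c0 -/c1 -/c2 -/qT.
  rewrite dot_path_path -/c0 -/c1 -/c2 in Hns.
  rewrite /F /phT; field; split => //.
have HFsm : dot (vsub w y) (vsub w y) < d * d.
  rewrite HFs.
  case: (Req_dec s T) => [->|Hne]; first by rewrite FT0; nra.
  have := Halall s; rewrite /D_x /no_cond /dist /= /R_dist FT0.
  move=> H; have := H (conj (conj I (not_eq_sym Hne)) Hsal).
  rewrite Rminus_0_r => H'; have := Rle_abs (F s); lra.
have Hnorm : norm (fun i => w i - y i) < d by apply: norm_lt_sq.
have := Hdall w Hw Hnorm.
move=> H; have := Rle_abs (u w - u y); rewrite Rabs_minus_sym in H.
have := Rle_abs (u y - u w); lra.
Qed.
End Closed.

Set Implicit Arguments.
Unset Strict Implicit.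

Lemma seq_pos (f : nat -> R) (c : R) : c < 1 -> f 0%nat < 0 ->
  (forall j, f j.+2 + f j = 2 * c * f j.+1) -> exists j, f j > 0.
Proof.
move=> Hc H0 Hrec; apply: NNPP => Hn.
have Hle : forall j, f j <= 0 by move=> j; apply: Rnot_lt_le => Hj; apply: Hn; exists j.
pose g j := - f j.
have Hg0 : forall j, 0 <= g j by move=> j; have := Hle j; rewrite /g; lra.
have Hgrec : forall j, g j.+2 = 2 * c * g j.+1 - g j by move=> j; have := Hrec j; rewrite /g; lra.
have Hdown : forall k, g k = 0 -> g k.+1 = 0 -> g 0%nat = 0.
  elim=> [//|k IH] H1 H2; apply: IH => //.
  have := Hgrec k; rewrite H1 H2; lra.
have Hpos : forall j, 0 < g j.
  case=> [|k]; first by rewrite /g; lra.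
  have := Hg0 k.+1; case/Rle_lt_or_eq_dec => // Hk; exfalso.
  have Hk2 : g k.+2 = 0 by have := Hgrec k; have := Hg0 k; have := Hg0 k.+2; rewrite -Hk; lra.
  have := Hdown k.+1 (esym Hk) Hk2; rewrite /g; lra.
pose r j := g j.+1 / g j.
have Hrpos : forall j, 0 < r j by move=> j; rewrite /r; apply: Rdiv_lt_0_compat; apply: Hpos.
have Hrrec : forall j, r j.+1 = 2 * c - / r j.
  move=> j; rewrite /r Hgrec; have := Hpos j; have := Hpos j.+1; move=> *; field; lra.
pose k := if Rle_dec c 0 then 1 else 1 - c * c.
have Hk : 0 < k by rewrite /k; destruct (Rle_dec c 0) as [H|H]; simpl; nra.
have Hquad : forall t, 0 < t -> k <= t * t - 2 * c * t + 1.
  move=> t Ht; rewrite /k; destruct (Rle_dec c 0) as [H|H]; simpl.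
  - have : 0 <= - c * t by nra. nra.
  - have := Rle_0_sqr (t - c); rewrite /Rsqr; nra.
have Hr0 := Hrpos 0%nat.
have Hbound : forall j, r j <= r 0%nat - INR j * k / r 0%nat.
  elim=> [|j IH]; first by rewrite /= /Rdiv Rmult_0_l Rmult_0_l; lra.
  rewrite Hrrec S_INR.
  have Hrj := Hrpos j.
  have Hrj0 : r j <= r 0%nat.
    apply: (Rle_trans _ _ _ IH).
    have : 0 <= INR j * k / r 0%nat by apply: Rmult_le_pos; [apply: Rmult_le_pos; [apply: pos_INR|lra]|apply: Rlt_le; apply: Rinv_0_lt_compat].
    lra.
  have Hq := Hquad (r j) Hrj.
  have E : 2 * c - / r j = r j - (r j * r j - 2 * c * r j + 1) / r j by field; lra.
  rewrite E.
  have : k / r 0%nat <= (r j * r j - 2 * c * r j + 1) / r j.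
    apply: (Rle_trans _ (k / r j)).
    - apply: Rmult_le_compat_l; first lra.
      apply: Rinv_le_contravar => //.
    - apply: Rmult_le_compat_r => //; apply: Rlt_le; apply: Rinv_0_lt_compat => //.
  have : (INR j + 1) * k / r 0%nat = INR j * k / r 0%nat + k / r 0%nat by field; lra.
  lra.
have [n [Hn1 Hn2]] := archimed_cor1 (k / (r 0%nat * r 0%nat)) ltac:(apply: Rdiv_lt_0_compat; nra).
have Hnpos : 0 < INR n by apply: lt_0_INR; exact: Hn2.
have := Hbound n; have := Hrpos n.
have : r 0%nat < INR n * k / r 0%nat.
  have H1 : / INR n * (INR n * r 0%nat) < k / (r 0%nat * r 0%nat) * (INR n * r 0%nat).
    apply: Rmult_lt_compat_r => //; nra.
  have E1 : / INR n * (INR n * r 0%nat) = r 0%nat by field; lra.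
  have E2 : k / (r 0%nat * r 0%nat) * (INR n * r 0%nat) = INR n * k / r 0%nat by field; lra.
  lra.
lra.
Qed.

Set Implicit Arguments.
Unset Strict Implicit.

Definition cr1 (g11 g12 p1 : R) (v : R * R) : R * R :=
  (v.1 - 2 * ((p1 + v.1 * g11 + v.2 * g12) / g11), v.2).
Definition cr2 (g12 g22 p2 : R) (v : R * R) : R * R :=
  (v.1, v.2 - 2 * ((p2 + v.1 * g12 + v.2 * g22) / g22)).
Definition cde (g11 g12 g22 p1 p2 al be : R) (v : R * R) : R :=
  al * (p1 + v.1 * g11 + v.2 * g12) + be * (p2 + v.1 * g12 + v.2 * g22).
Definition cE (g11 g12 g22 al be : R) : R := al * al * g11 + 2 * al * be * g12 + be * be * g22.
Definition cre (g11 g12 g22 p1 p2 al be : R) (v : R * R) : R * R :=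
  (v.1 - 2 * (cde g11 g12 g22 p1 p2 al be v / cE g11 g12 g22 al be) * al,
   v.2 - 2 * (cde g11 g12 g22 p1 p2 al be v / cE g11 g12 g22 al be) * be).

Lemma ident1 g11 g12 g22 p1 p2 al be : g11 <> 0 -> g22 <> 0 -> cE g11 g12 g22 al be <> 0 ->
  cr2 g12 g22 p2 (cr1 g11 g12 p1 (cre g11 g12 g22 p1 p2 al be
     (cr2 g12 g22 p2 (cr1 g11 g12 p1 (0, 0))))) = cre g11 g12 g22 p1 p2 al be (0, 0).
Proof.
move=> H1 H2 H3; rewrite /cr2 /cr1 /cre /cde /=; rewrite /cE in H3 *.
by congr pair; field; auto.
Qed.

Lemma ident2 g11 g12 g22 p1 p2 al be : g11 <> 0 -> g22 <> 0 ->
  cde g11 g12 g22 p1 p2 al be (cr2 g12 g22 p2 (cr1 g11 g12 p1 (cr2 g12 g22 p2 (cr1 g11 g12 p1 (0, 0)))))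
  + cde g11 g12 g22 p1 p2 al be (0, 0)
  = 2 * (2 * (g12 * g12) / (g11 * g22) - 1) *
    cde g11 g12 g22 p1 p2 al be (cr2 g12 g22 p2 (cr1 g11 g12 p1 (0, 0))).
Proof. move=> H1 H2; rewrite /cr2 /cr1 /cde /=; field; auto. Qed.

Section TwoD.
Variable N : nat.
Variables (z1 z2 : vec N) (al be : R).
Implicit Types x y w : vec N.

Definition rep w (v : R * R) : vec N := fun i => w i + v.1 * z1 i + v.2 * z2 i.
Definition comb : vec N := fun i => al * z1 i + be * z2 i.
Definition rho w := reflect_e z2 (reflect_e z1 w).

Lemma rep00 w : rep w (0, 0) = w.
Proof. by apply: functional_extensionality => i; rewrite /rep /=; ring. Qed.

Lemma dot_rep y w v : dot y (rep w v) = dot y w + v.1 * dot y z1 + v.2 * dot y z2.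
Proof.
have -> : rep w v = vadd w (vadd (vscal v.1 z1) (vscal v.2 z2)).
  by apply: functional_extensionality => i; rewrite /rep /vadd /vscal; ring.
by rewrite !dot_addr !dot_scalr; ring.
Qed.

Lemma dot_comb y : dot comb y = al * dot z1 y + be * dot z2 y.
Proof.
have -> : comb = vadd (vscal al z1) (vscal be z2).
  by apply: functional_extensionality => i; rewrite /comb /vadd /vscal.
by rewrite dot_addl !dot_scall.
Qed.

Notation g11 := (dot z1 z1).
Notation g12 := (dot z1 z2).
Notation g22 := (dot z2 z2).

Lemma refl1_rep w v : reflect_e z1 (rep w v) = rep w (cr1 g11 g12 (dot z1 w) v).
Proof.
apply: functional_extensionality => i; rewrite /reflect_e dot_rep /rep /cr1 /=; ring.
Qed.

Lemma refl2_rep w v : reflect_e z2 (rep w v) = rep w (cr2 g12 g22 (dot z2 w) v).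
Proof.
apply: functional_extensionality => i; rewrite /reflect_e dot_rep /rep /cr2 /= (dot_sym z2 z1); ring.
Qed.

Lemma dot_comb_rep w v : dot comb (rep w v) = cde g11 g12 g22 (dot z1 w) (dot z2 w) al be v.
Proof. rewrite dot_comb !dot_rep /cde (dot_sym z2 z1); ring. Qed.

Lemma dot_comb_comb : dot comb comb = cE g11 g12 g22 al be.
Proof. rewrite dot_comb !(dot_sym _ comb) !dot_comb (dot_sym z2 z1) /cE; ring. Qed.

Lemma refle_rep w v : reflect_e comb (rep w v) = rep w (cre g11 g12 g22 (dot z1 w) (dot z2 w) al be v).
Proof.
apply: functional_extensionality => i.
rewrite /reflect_e dot_comb_rep dot_comb_comb /rep /cre /= /comb; ring.
Qed.

Lemma rho_rep w v : rho (rep w v) =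
  rep w (cr2 g12 g22 (dot z2 w) (cr1 g11 g12 (dot z1 w) v)).
Proof. by rewrite /rho refl1_rep refl2_rep. Qed.

Lemma rho_refl_rho w : g11 <> 0 -> g22 <> 0 -> dot comb comb <> 0 ->
  rho (reflect_e comb (rho w)) = reflect_e comb w.
Proof.
move=> H1 H2 H3; rewrite dot_comb_comb in H3.
rewrite -{1 2}(rep00 w) rho_rep refle_rep rho_rep refle_rep.
by congr rep; apply: ident1.
Qed.

Lemma rec_rho y : g11 <> 0 -> g22 <> 0 ->
  dot comb (rho (rho y)) + dot comb y = 2 * (2 * (g12 * g12) / (g11 * g22) - 1) * dot comb (rho y).
Proof.
move=> H1 H2.
rewrite -{1 2 3}(rep00 y) !rho_rep !dot_comb_rep.
by rewrite -ident2 // -{2}(rep00 y) dot_comb_rep.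
Qed.
End TwoD.

Set Implicit Arguments.
Unset Strict Implicit.

Lemma twoD N R0 (u : vec N -> R) z1 z2 al be :
  Zs R0 u z1 -> Zs R0 u z2 ->
  dot z1 z2 * dot z1 z2 < dot z1 z1 * dot z2 z2 ->
  nz (comb z1 z2 al be) -> G R0 u (comb z1 z2 al be) -> G R0 u (vopp (comb z1 z2 al be)).
Proof.
move=> HZ1 HZ2 Hind Hnz HG.
have H1 : dot z1 z1 <> 0 by case: HZ1 => /nz_dot.
have H2 : dot z2 z2 <> 0 by case: HZ2 => /nz_dot.
have H3 : dot (comb z1 z2 al be) (comb z1 z2 al be) <> 0 by move/nz_dot: Hnz.
have H1p : 0 < dot z1 z1 by have := dot_ge0 z1; lra.
have H2p : 0 < dot z2 z2 by have := dot_ge0 z2; lra.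
set e := comb z1 z2 al be in Hnz HG H3 *.
set r := rho z1 z2.
set c := 2 * (dot z1 z2 * dot z1 z2) / (dot z1 z1 * dot z2 z2) - 1.
have Hc : c < 1.
  rewrite /c; have Hp : 0 < dot z1 z1 * dot z2 z2 by nra.
  have : dot z1 z2 * dot z1 z2 / (dot z1 z1 * dot z2 z2) < 1.
    apply: (Rmult_lt_reg_r (dot z1 z1 * dot z2 z2)) => //.
    rewrite /Rdiv Rmult_assoc Rinv_l; lra.
  rewrite /Rdiv; lra.
have Hinv : forall j w, inBall R0 w -> inBall R0 (iter j r w) /\ u (iter j r w) = u w.
  elim=> [|j IH] w Hw //=.
  have [Hb Hu] := IH w Hw.
  have Hb1 := inBall_refl z1 Hb.
  split; first by apply: inBall_refl.
  by rewrite /r /rho (Zs_sym HZ2) // (Zs_sym HZ1).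
have Hconj : forall j w, iter j r (reflect_e e (iter j r w)) = reflect_e e w.
  elim=> [|j IH] w; first by [].
  have -> : iter j.+1 r w = r (iter j r w) by rewrite iterS.
  rewrite iterSr /r rho_refl_rho //; exact: IH.
move=> x Hx Hp.
pose f j := dot e (iter j r x).
have Hf0 : f 0%nat < 0 by move: Hp; rewrite dot_oppl /f /=; lra.
have Hrec : forall j, f j.+2 + f j = 2 * c * f j.+1.
  move=> j; rewrite /f !iterS /r rec_rho //.
have [j Hj] := seq_pos Hc Hf0 Hrec.
set y := iter j r x in Hj.
have [Hyb Hyu] := Hinv j x Hx.
have HGy := HG y Hyb Hj.
rewrite refl_opp -(Hconj j x) -/y.
have [_ ->] := Hinv j _ (inBall_refl e Hyb).
rewrite -Hyu; exact HGy.
Qed.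

Set Implicit Arguments.
Unset Strict Implicit.

Section Conn.
Variable N : nat.
Variable R0 : R.
Variable u : vec N -> R.
Hypothesis Hc : continuous_on_ball R0 u.
Hypothesis Hs : separable R0 u.
Implicit Types x y z e A B : vec N.

Lemma vopp_path A B s : vopp (path A B s) = path (vopp A) (vopp B) s.
Proof. by apply: functional_extensionality => i; rewrite /vopp /path /vadd /vscal; ring. Qed.

Lemma conn A B :
  (forall t, 0 <= t <= 1 -> nz (path A B t) /\ ~ Zs R0 u (path A B t)) ->
  G R0 u (path A B 0) -> G R0 u (path A B 1).
Proof.
move=> Hpath HG0.
pose E t := 0 <= t <= 1 /\ forall s, 0 <= s <= t -> G R0 u (path A B s).
have HE0 : E 0.
  split; first lra.
  by move=> s Hs'; have -> : s = 0 by lra.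
have Hb : bound E by exists 1 => t [Ht _]; lra.
have [T [HT1 HT2]] := (@completeness E Hb (ex_intro _ 0 HE0)).
have HT0 : 0 <= T by apply: HT1.
have HT1' : T <= 1 by apply: HT2 => t [Ht _]; lra.
have Happ : forall eps, eps > 0 -> exists s, E s /\ T - eps < s.
  move=> eps He; apply: NNPP => Hn.
  have : T <= T - eps.
    apply: HT2 => t Et; apply: Rnot_lt_le => Ht; apply: Hn; exists t; split => //.
  lra.
have GT : G R0 u (path A B T).
  apply: G_closed => // eps He.
  have [s [[Hs1 Hs2] Hs3]] := Happ eps He.
  have HsT : s <= T by apply: HT1; split.
  exists s; split; first by rewrite Rabs_left1; lra.
  by apply: Hs2; lra.
have Gbelow : forall s, 0 <= s <= T -> G R0 u (path A B s).
  move=> s Hs'; case: (Req_dec s T) => [->|Hne] //.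
  have [s' [[Hs'1 Hs'2] Hs'3]] := Happ (T - s) ltac:(lra).
  by apply: Hs'2; lra.
case: (Req_dec T 1) => [HT|HT]; first by rewrite -HT.
exfalso.
have Hnear : forall eps, eps > 0 -> exists s, Rabs (s - T) < eps /\ G R0 u (path (vopp A) (vopp B) s).
  move=> eps He.
  set e' := Rmin eps (1 - T).
  have He' : e' > 0 by apply: Rmin_pos; lra.
  have He'1 : e' <= eps by apply: Rmin_l.
  have He'2 : e' <= 1 - T by apply: Rmin_r.
  have [s [Hs1 HsG]] : exists s, T < s < T + e' /\ ~ G R0 u (path A B s).
    apply: NNPP => Hn.
    have : E (T + e' / 2).
      split; first lra.
      move=> s Hs'; case: (Rle_lt_dec s T) => Hst; first by apply: Gbelow; lra.
      apply: NNPP => Hng; apply: Hn; exists s; split => //; lra.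
    move/HT1; lra.
  have [Hnz _] := Hpath s ltac:(lra).
  exists s; split; first by rewrite Rabs_right; lra.
  rewrite -vopp_path; case: (sep_G Hs Hnz) => // H; contradiction.
have GT' := G_closed Hc Hnear.
have [Hnz HnZ] := Hpath T ltac:(lra).
by apply: HnZ; split => //; split => //; rewrite vopp_path.
Qed.
End Conn.

Set Implicit Arguments.
Unset Strict Implicit.

Section Lin.
Variable N : nat.
Variable R0 : R.
Variable u : vec N -> R.
Hypothesis Hc : continuous_on_ball R0 u.
Hypothesis Hs : separable R0 u.
Implicit Types x y z e A B w : vec N.

Definition vzero : vec N := fun _ => 0.
Definition L z := z = vzero \/ Zs R0 u z.
Definition indep w1 w2 := dot w1 w2 * dot w1 w2 < dot w1 w1 * dot w2 w2.

Lemma indep_pos w1 w2 : indep w1 w2 -> 0 < dot w1 w1 /\ 0 < dot w2 w2.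
Proof.
rewrite /indep => H; have := dot_ge0 w1; have := dot_ge0 w2.
have := Rle_0_sqr (dot w1 w2); rewrite /Rsqr => *.
split; apply: Rnot_le_lt => H'; nra.
Qed.

Lemma comb_nz w1 w2 a b : indep w1 w2 -> (a <> 0 \/ b <> 0) -> nz (comb w1 w2 a b).
Proof.
move=> Hi Hab; have [H1 H2] := indep_pos Hi.
apply/nz_dot; rewrite dot_comb_comb /cE.
move: Hi; rewrite /indep => Hi.
set g11 := dot w1 w1 in H1 Hi *; set g12 := dot w1 w2 in Hi *; set g22 := dot w2 w2 in H2 Hi *.
have Key : g11 * (a * a * g11 + 2 * a * b * g12 + b * b * g22)
           = (a * g11 + b * g12) * (a * g11 + b * g12) + b * b * (g11 * g22 - g12 * g12) by ring.
move=> H0; rewrite H0 Rmult_0_r in Key.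
have Hs1 := Rle_0_sqr (a * g11 + b * g12); rewrite /Rsqr in Hs1.
case: Hab => Hab.
- case: (Req_dec b 0) => Hb.
  + rewrite Hb in Key; have : a * g11 <> 0 by apply: Rmult_integral_contrapositive; split; lra.
    move=> Hag; have : (a * g11 + 0 * g12) * (a * g11 + 0 * g12) > 0.
      rewrite Rmult_0_l Rplus_0_r; nra.
    nra.
  + have : b * b > 0 by nra. nra.
- have : b * b > 0 by nra. nra.
Qed.

Lemma nz_opp x : nz x -> nz (vopp x).
Proof. by case=> i Hi; exists i; rewrite /vopp => H; apply: Hi; lra. Qed.

Lemma vec_ext x y : (forall i, x i = y i) -> x = y.
Proof. exact: functional_extensionality. Qed.

Lemma plane w1 w2 : indep w1 w2 -> exists a b, (a <> 0 \/ b <> 0) /\ Zs R0 u (comb w1 w2 a b).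
Proof.
move=> Hi; apply: NNPP => Hn.
have Hno : forall a b, (a <> 0 \/ b <> 0) -> ~ Zs R0 u (comb w1 w2 a b).
  by move=> a b Hab HZ; apply: Hn; exists a, b.
have E1 : forall t, path w1 (vsub w2 w1) t = comb w1 w2 (1 - t) t.
  by move=> t; apply: vec_ext => i; rewrite /path /vadd /vscal /vsub /comb; ring.
have E2 : forall t, path w2 (vsub (vopp w1) w2) t = comb w1 w2 (- t) (1 - t).
  by move=> t; apply: vec_ext => i; rewrite /path /vadd /vscal /vsub /vopp /comb; ring.
have Hab1 : forall t, (1 - t <> 0 \/ t <> 0) by move=> t; case: (Req_dec t 0) => H; [left|right]; lra.
have Hab2 : forall t, (- t <> 0 \/ 1 - t <> 0) by move=> t; case: (Req_dec t 0) => H; [right|left]; lra.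
have P1 : forall t, 0 <= t <= 1 -> nz (path w1 (vsub w2 w1) t) /\ ~ Zs R0 u (path w1 (vsub w2 w1) t).
  by move=> t _; rewrite E1; split; [apply: comb_nz | apply: Hno].
have P2 : forall t, 0 <= t <= 1 -> nz (path w2 (vsub (vopp w1) w2) t) /\ ~ Zs R0 u (path w2 (vsub (vopp w1) w2) t).
  by move=> t _; rewrite E2; split; [apply: comb_nz | apply: Hno].
have P1' : forall t, 0 <= t <= 1 -> nz (path (vopp w1) (vopp (vsub w2 w1)) t) /\ ~ Zs R0 u (path (vopp w1) (vopp (vsub w2 w1)) t).
  move=> t Ht; rewrite -vopp_path; have [Hi' HZ] := P1 t Ht; split.
  - exact: nz_opp.
  - by move=> /Zs_opp; rewrite vopp_opp; exact: HZ.
have P2' : forall t, 0 <= t <= 1 -> nz (path (vopp w2) (vopp (vsub (vopp w1) w2)) t) /\ ~ Zs R0 u (path (vopp w2) (vopp (vsub (vopp w1) w2)) t).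
  move=> t Ht; rewrite -vopp_path; have [Hi' HZ] := P2 t Ht; split.
  - exact: nz_opp.
  - by move=> /Zs_opp; rewrite vopp_opp; exact: HZ.
have Ew1 : comb w1 w2 1 0 = w1 by apply: vec_ext => i; rewrite /comb; ring.
have Ew2 : comb w1 w2 0 1 = w2 by apply: vec_ext => i; rewrite /comb; ring.
have Ew1' : comb w1 w2 (-1) 0 = vopp w1 by apply: vec_ext => i; rewrite /comb /vopp; ring.
have Hnz1 : nz w1 by rewrite -Ew1; apply: comb_nz => //; left; lra.
have Z1 : ~ Zs R0 u w1 by rewrite -Ew1; apply: Hno; left; lra.
case: (sep_G Hs Hnz1) => HG.
- have G2 : G R0 u w2.
    have := conn Hc Hs P1; rewrite !E1 Rminus_0_r Rminus_diag Ew1 Ew2; apply => //.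
  have G3 : G R0 u (vopp w1).
    have := conn Hc Hs P2; rewrite !E2 Rminus_0_r Rminus_diag Ropp_0 Ew2 Ew1'; apply => //.
  by apply: Z1.
- have G2 : G R0 u (vopp w2).
    have := conn Hc Hs P1'; rewrite -!vopp_path !E1 Rminus_0_r Rminus_diag Ew1 Ew2; apply => //.
  have G3 : G R0 u w1.
    have := conn Hc Hs P2'; rewrite -!vopp_path !E2 Rminus_0_r Rminus_diag Ropp_0 Ew2 Ew1' vopp_opp; apply => //.
  by apply: Z1.
Qed.

Lemma L_scal a z : L z -> L (vscal a z).
Proof.
case=> [->|HZ]; first by left; apply: vec_ext => i; rewrite /vscal /vzero; ring.
case: (Req_dec a 0) => Ha.
- by left; apply: vec_ext => i; rewrite /vscal /vzero Ha; ring.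
- by right; apply: Zs_scal.
Qed.

Lemma L_add z1 z2 : L z1 -> L z2 -> L (vadd z1 z2).
Proof.
case=> [->|H1].
  have -> : vadd vzero z2 = z2 by apply: vec_ext => i; rewrite /vadd /vzero; ring.
  done.
case=> [->|H2].
  have -> : vadd z1 vzero = z1 by apply: vec_ext => i; rewrite /vadd /vzero; ring.
  by right.
case: (classic (indep z1 z2)) => Hi.
- have Ec : vadd z1 z2 = comb z1 z2 1 1 by apply: vec_ext => i; rewrite /vadd /comb; ring.
  have Hnz : nz (comb z1 z2 1 1) by apply: comb_nz => //; left; lra.
  rewrite Ec; right; split => //.
  case: (sep_G Hs Hnz) => HG.
  + by split => //; apply: twoD.
  + have Ec' : vopp (comb z1 z2 1 1) = comb z1 z2 (-1) (-1)
      by apply: vec_ext => i; rewrite /vopp /comb; ring.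
    rewrite Ec' in HG.
    have Hnz' : nz (comb z1 z2 (-1) (-1)) by apply: comb_nz => //; left; lra.
    have := twoD H1 H2 Hi Hnz' HG; rewrite -Ec' vopp_opp => HG'.
    by split => //; rewrite Ec'.
- have [Hnz1 _] := H1.
  have Hp1 := dot_gt0 Hnz1.
  set lam := dot z1 z2 / dot z1 z1.
  have Hd : dot (vsub z2 (vscal lam z1)) (vsub z2 (vscal lam z1)) = 0.
    apply: Rle_antisym; last by apply: dot_ge0.
    rewrite !dot_subl !dot_subr !dot_scall !dot_scalr (dot_sym z2 z1) /lam.
    move: Hi; rewrite /indep => Hi.
    have : dot z1 z1 * dot z2 z2 <= dot z1 z2 * dot z1 z2 by lra.
    move=> H; apply: (Rmult_le_reg_r (dot z1 z1)) => //.
    have E : (dot z2 z2 - dot z1 z2 / dot z1 z1 * dot z1 z2 -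
              (dot z1 z2 / dot z1 z1 * dot z1 z2 - dot z1 z2 / dot z1 z1 * (dot z1 z2 / dot z1 z1 * dot z1 z1))) * dot z1 z1
             = dot z1 z1 * dot z2 z2 - dot z1 z2 * dot z1 z2 by field; lra.
    rewrite E; lra.
  have Ez2 : z2 = vscal lam z1.
    apply: vec_ext => i; have := dot_eq0 Hd.
    move/(f_equal (fun f => f i)); rewrite /vsub /vscal; lra.
  have -> : vadd z1 z2 = vscal (1 + lam) z1 by rewrite Ez2; apply: vec_ext => i; rewrite /vadd /vscal; ring.
  by apply: L_scal; right.
Qed.

Lemma L_sub z1 z2 : L z1 -> L z2 -> L (vsub z1 z2).
Proof.
move=> H1 H2; have -> : vsub z1 z2 = vadd z1 (vscal (-1) z2) by apply: vec_ext => i; rewrite /vsub /vadd /vscal; ring.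
by apply: L_add => //; apply: L_scal.
Qed.

Lemma L_zero : L vzero. Proof. by left. Qed.
End Lin.

Set Implicit Arguments.
Unset Strict Implicit.

Section Hyper.
Variable N : nat.
Variable R0 : R.
Variable u : vec N -> R.
Hypothesis Hc : continuous_on_ball R0 u.
Hypothesis Hs : separable R0 u.
Variable v : vec N.
Hypothesis Hv : nz v.
Hypothesis HGv : G R0 u v.
Hypothesis HnGv : ~ G R0 u (vopp v).
Implicit Types x y z e w : vec N.

Definition delta (k : 'I_N) : vec N := fun i => if i == k then 1 else 0.

Lemma dep_mult z1 z2 : nz z1 -> ~ indep z1 z2 -> z2 = vscal (dot z1 z2 / dot z1 z1) z1.
Proof.
move=> Hnz1 Hi; have Hp1 := dot_gt0 Hnz1.
set lam := dot z1 z2 / dot z1 z1.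
have Hd : dot (vsub z2 (vscal lam z1)) (vsub z2 (vscal lam z1)) = 0.
  apply: Rle_antisym; last by apply: dot_ge0.
  rewrite !dot_subl !dot_subr !dot_scall !dot_scalr (dot_sym z2 z1) /lam.
  move: Hi; rewrite /indep => Hi.
  have : dot z1 z1 * dot z2 z2 <= dot z1 z2 * dot z1 z2 by lra.
  move=> H; apply: (Rmult_le_reg_r (dot z1 z1)) => //.
  have E : (dot z2 z2 - dot z1 z2 / dot z1 z1 * dot z1 z2 -
            (dot z1 z2 / dot z1 z1 * dot z1 z2 - dot z1 z2 / dot z1 z1 * (dot z1 z2 / dot z1 z1 * dot z1 z1))) * dot z1 z1
           = dot z1 z1 * dot z2 z2 - dot z1 z2 * dot z1 z2 by field; lra.
  rewrite E; lra.
apply: vec_ext => i; have := dot_eq0 Hd.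
move/(f_equal (fun f => f i)); rewrite /vsub /vscal; lra.
Qed.

Lemma notZv : ~ Zs R0 u v.
Proof. by case=> _ [_ H]. Qed.

Lemma notLv : ~ L R0 u v.
Proof.
case=> [E|]; last exact: notZv.
by case: Hv => i; rewrite E /vzero.
Qed.

Lemma exists_c k : exists c, L R0 u (vsub (delta k) (vscal c v)).
Proof.
case: (classic (indep v (delta k))) => Hi.
- have [a [b [Hab HZ]]] := plane Hc Hs Hi.
  case: (Req_dec b 0) => Hb.
  + exfalso; case: Hab => // Ha.
    have E : v = vscal (/ a) (comb v (delta k) a b).
      by apply: vec_ext => i; rewrite /vscal /comb Hb; field.
    apply: notZv; rewrite E; apply: Zs_scal => //.
    by apply: Rinv_neq_0_compat.
  + exists (- a / b); right.
    have -> : vsub (delta k) (vscal (- a / b) v) = vscal (/ b) (comb v (delta k) a b).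
      by apply: vec_ext => i; rewrite /vsub /vscal /comb; field.
    apply: Zs_scal => //; exact: Rinv_neq_0_compat.
- exists (dot v (delta k) / dot v v); left.
  rewrite {1}(dep_mult Hv Hi); apply: vec_ext => i; rewrite /vsub /vzero; ring.
Qed.

Definition cvec : vec N := fun k => proj1_sig (constructive_indefinite_description _ (exists_c k)).

Lemma cvec_spec k : L R0 u (vsub (delta k) (vscal (cvec k) v)).
Proof. by rewrite /cvec; case: constructive_indefinite_description. Qed.

Lemma decomp x : L R0 u (vsub x (vscal (dot cvec x) v)).
Proof.
have -> : vsub x (vscal (dot cvec x) v) =
          \big[@vadd N/@vzero N]_(k < N) vscal (x k) (vsub (delta k) (vscal (cvec k) v)).
  apply: vec_ext => i.
  rewrite (big_morph (fun w : vec N => w i) (id1 := 0) (op1 := Rplus)) //.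
  rewrite /vscal /vsub.
  have -> : \big[Rplus/0]_(k < N) (x k * ((if i == k then 1 else 0) - cvec k * v i))
          = \big[Rplus/0]_(k < N) (if i == k then x k else 0) + (- v i) * dot cvec x.
    rewrite /dot -sum_scal -sum_add; apply: sum_ext => k; rewrite /delta.
    case: (i == k); ring.
  rewrite (sum_one (k := i)); first by rewrite eqxx; ring.
  by move=> k /negbTE; rewrite eq_sym => ->.
apply: big_ind; [exact: L_zero | move=> *; exact: L_add | move=> k _].
by apply: L_scal; apply: cvec_spec.
Qed.

Lemma L_iff x : L R0 u x <-> dot cvec x = 0.
Proof.
split => [HL|H0].
- apply: NNPP => Hne.
  have H1 := L_sub Hs HL (decomp x).
  have E : vsub x (vsub x (vscal (dot cvec x) v)) = vscal (dot cvec x) v.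
    by apply: vec_ext => i; rewrite /vsub /vscal; ring.
  rewrite E in H1.
  have := L_scal (/ dot cvec x) H1.
  have -> : vscal (/ dot cvec x) (vscal (dot cvec x) v) = v.
    by apply: vec_ext => i; rewrite /vscal; field.
  exact: notLv.
- have := decomp x; rewrite H0.
  by have -> : vsub x (vscal 0 v) = x by apply: vec_ext => i; rewrite /vsub /vscal; ring.
Qed.

Lemma cvec_v : dot cvec v = 1.
Proof.
apply: NNPP => Hne.
have := decomp v.
have -> : vsub v (vscal (dot cvec v) v) = vscal (1 - dot cvec v) v.
  by apply: vec_ext => i; rewrite /vsub /vscal; ring.
move=> H; have := L_scal (/ (1 - dot cvec v)) H.
have -> : vscal (/ (1 - dot cvec v)) (vscal (1 - dot cvec v) v) = v.
  apply: vec_ext => i; rewrite /vscal; field; lra.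
exact: notLv.
Qed.

Lemma cvec_nz : nz cvec.
Proof.
apply/nz_dot => H0; have E := dot_eq0 H0.
have := cvec_v; rewrite E /dot big1; first lra.
by move=> i _; ring.
Qed.

Lemma hemisphere p : (p = cvec \/ p = vopp cvec) -> G R0 u p ->
  forall e, 0 < dot p e -> G R0 u e.
Proof.
move=> Hp HGp e He.
have Hpp : 0 < dot p p.
  apply: dot_gt0; case: Hp => ->; [exact: cvec_nz | exact: nz_opp cvec_nz].
have Hpath : forall t, 0 <= t <= 1 -> nz (path p (vsub e p) t) /\ ~ Zs R0 u (path p (vsub e p) t).
  move=> t Ht.
  have Hd : 0 < dot p (path p (vsub e p) t).
    rewrite dot_sym dot_path_l dot_subl (dot_sym e p); nra.
  have Hnz : nz (path p (vsub e p) t).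
    apply/nz_dot => H0; have E := dot_eq0 H0; move: Hd; rewrite E /dot big1; first lra.
    by move=> i _; ring.
  split => // HZ.
  have /L_iff Hc0 : L R0 u (path p (vsub e p) t) by right.
  case: Hp => Ep; rewrite {1}Ep in Hd.
  + lra.
  + by rewrite dot_oppl Hc0 in Hd; lra.
have := conn Hc Hs Hpath.
have -> : path p (vsub e p) 0 = p by apply: vec_ext => i; rewrite /path /vadd /vscal /vsub; ring.
have -> : path p (vsub e p) 1 = e by apply: vec_ext => i; rewrite /path /vadd /vscal /vsub; ring.
by apply.
Qed.

Lemma main_dir : exists p, nz p /\ (forall e, 0 < dot p e -> G R0 u e) /\
  (forall e, nz e -> dot p e = 0 -> G R0 u e).
Proof.
case: (classic (G R0 u cvec)) => HG.
- exists cvec; split; first exact: cvec_nz.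
  split; first by apply: hemisphere => //; left.
  move=> e He H0; have /L_iff := H0; case=> [E|[_ [H _]]] //.
  by case: He => i; rewrite E /vzero.
- have HG' : G R0 u (vopp cvec) by case: (sep_G Hs cvec_nz).
  exists (vopp cvec); split; first exact: nz_opp cvec_nz.
  split; first by apply: hemisphere => //; right.
  move=> e He H0; rewrite dot_oppl in H0.
  have : dot cvec e = 0 by lra.
  move/L_iff; case=> [E|[_ [H _]]] //.
  by case: He => i; rewrite E /vzero.
Qed.
End Hyper.

Set Implicit Arguments.
Unset Strict Implicit.

Section Final.
Variable N : nat.
Hypothesis HN : (2 <= N)%nat.
Implicit Types x y z e w : vec N.

Lemma klt : (N - 1 < N)%nat. Proof. lia. Qed.
Lemma kplt : (N - 2 < N)%nat. Proof. lia. Qed.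
Definition kl : 'I_N := Ordinal klt.
Definition kp : 'I_N := Ordinal kplt.
Lemma kp_kl : kp != kl.
Proof. apply/eqP => E; have := f_equal (@nat_of_ord N) E; rewrite /=; lia. Qed.

Definition eps : vec N := delta kl.

Lemma dot_eps x : dot x eps = x kl.
Proof.
rewrite /dot (sum_one (k := kl)); first by rewrite /eps /delta eqxx; ring.
by move=> i Hi; rewrite /eps /delta (negbTE Hi); ring.
Qed.

Lemma dot_eps_eps : dot eps eps = 1.
Proof. by rewrite dot_eps /eps /delta eqxx. Qed.

Lemma coord_kl x : coord x (N - 1) = x kl.
Proof.
rewrite /coord (insubT (fun k => (k < N)%nat) klt) /=.
by congr x; apply: val_inj.
Qed.

Lemma dot_norm x : dot x x = norm x * norm x.
Proof. by rewrite /norm sqrt_sqrt //; apply: dot_ge0. Qed.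

Lemma norm_ge0 x : 0 <= norm x.
Proof. exact: sqrt_pos. Qed.

Variable p : vec N.
Hypothesis Hp : nz p.

Definition np := norm p.
Lemma np_pos : 0 < np.
Proof. rewrite /np /norm; apply: sqrt_lt_R0; exact: dot_gt0. Qed.

Definition q : vec N := vscal (/ np) p.
Lemma q_unit : dot q q = 1.
Proof.
have H := np_pos; rewrite /q dot_scall dot_scalr dot_norm -/np; field; lra.
Qed.

Definition hv : vec N := vsub eps q.
Definition Mh : mat N := fun j i => (if j == i then 1 else 0) - 2 * (hv j * hv i) / dot hv hv.

Lemma tapply_M x : mat_tapply Mh x = reflect_e hv x.
Proof.
apply: vec_ext => i; rewrite /mat_tapply /Mh /reflect_e.
have -> : \big[Rplus/0]_(j < N) (((if j == i then 1 else 0) - 2 * (hv j * hv i) / dot hv hv) * x j)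
   = \big[Rplus/0]_(j < N) (if j == i then x j else 0) + (- 2 * hv i / dot hv hv) * dot hv x.
  rewrite /dot -sum_scal -sum_add; apply: sum_ext => j.
  case: (j == i); rewrite /Rdiv; ring.
rewrite (sum_one (k := i)); first by rewrite eqxx; rewrite /Rdiv; ring.
by move=> j Hj; rewrite (negbTE Hj).
Qed.

Lemma orth_M : orthogonal Mh.
Proof.
move=> i k; rewrite /Mh.
case: (Req_dec (dot hv hv) 0) => HD.
- have E0 := dot_eq0 HD.
  rewrite E0 (sum_one (k := i)).
  + rewrite eqxx; case: (i == k); rewrite /Rdiv; ring.
  + by move=> j Hj; rewrite (negbTE Hj); rewrite /Rdiv; ring.
- set D := dot hv hv.
  have -> : \big[Rplus/0]_(j < N) (((if j == i then 1 else 0) - 2 * (hv j * hv i) / D) *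
                                   ((if j == k then 1 else 0) - 2 * (hv j * hv k) / D))
      = \big[Rplus/0]_(j < N) (if j == i then ((if j == k then 1 else 0) - 2 * (hv j * hv k) / D) - 2 * (hv j * hv i) / D * (if j == k then 1 else 0) else 0)
        + \big[Rplus/0]_(j < N) (if j == i then 0 else - 2 * (hv j * hv i) / D * (if j == k then 1 else 0))
        + (4 * hv i * hv k / (D * D)) * \big[Rplus/0]_(j < N) (hv j * hv j).
    rewrite -sum_scal -!sum_add; apply: sum_ext => j.
    case: (j == i); case: (j == k) => /=; field; exact: HD.
  have -> : \big[Rplus/0]_(j < N) (hv j * hv j) = D by [].
  rewrite (sum_one (k := i)); last by move=> j Hj; rewrite (negbTE Hj).
  rewrite (sum_one (k := k)); last by move=> j Hj; rewrite (negbTE Hj); case: (j == i); ring.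
  case: (eqVneq i k) => [<-|Hik].
  - rewrite !eqxx /=; field; exact: HD.
  - rewrite !eqxx; field; exact: HD.
Qed.

Lemma refl_hv_eps : reflect_e hv eps = q.
Proof.
case: (classic (nz hv)) => Hnz.
- have [H _] := @refl_swap N eps q ltac:(by rewrite dot_eps_eps q_unit) Hnz.
  exact: H.
- have E : hv = @vzero N.
    apply: vec_ext => i; apply: NNPP => Hi; apply: Hnz; exists i; exact: Hi.
  have Eq : eps = q.
    apply: vec_ext => i; have := f_equal (fun f => f i) E; rewrite /hv /vsub /vzero; lra.
  rewrite -Eq; apply: vec_ext => i; rewrite /reflect_e E /vzero; ring.
Qed.

Lemma dot_p_refl x : dot p (reflect_e hv x) = np * x kl.
Proof.
have Ep : p = vscal np q.
  have H := np_pos; apply: vec_ext => i; rewrite /q /vscal; field; lra.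
rewrite {1}Ep dot_scall -refl_hv_eps refl_dot dot_sym dot_eps //.
Qed.

Lemma circ_kl a t : @circ_pt N a t kl = a * sin t.
Proof.
rewrite /circ_pt /=.
have -> : (N - 1 == N - 2)%nat = false by apply/eqP; lia.
by rewrite eqxx.
Qed.

Lemma circ_dot a t : dot (@circ_pt N a t) (@circ_pt N a t) = a * a.
Proof.
rewrite /dot (sum_two kp_kl).
- rewrite circ_kl /circ_pt /= eqxx.
  have := sin2_cos2 t; rewrite /Rsqr; nra.
- move=> i H1 H2; rewrite /circ_pt.
  have -> : (nat_of_ord i == N - 2)%nat = false.
    apply/eqP => E; move/eqP: H1; apply; apply: val_inj; rewrite /= E //.
  have -> : (nat_of_ord i == N - 1)%nat = false.
    apply/eqP => E; move/eqP: H2; apply; apply: val_inj; rewrite /= E //.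
  ring.
Qed.
End Final.

Lemma nz_of_dot {N : nat} {p e : vec N} : dot p e <> 0 -> nz e.
Proof.
move=> H; apply: NNPP => Hn; apply: H; rewrite /dot big1 // => i _.
case: (Req_dec (e i) 0) => [->|Hi]; first ring.
by case: Hn; exists i.
Qed.

Lemma nz_of_neq {N : nat} {x y : vec N} : x <> y -> nz (vsub x y).
Proof.
move=> H; apply: NNPP => Hn; apply: H; apply: functional_extensionality => i.
apply: NNPP => Hi; apply: Hn; exists i; rewrite /vsub; lra.
Qed.

Lemma norm_dot_eq {N : nat} {x : vec N} {a} : norm x = a -> dot x x = a * a.
Proof. by move=> <-; rewrite /norm sqrt_sqrt //; apply: dot_ge0. Qed.

Unset Implicit Arguments.
Set Strict Implicit.

Theorem theorem2p1 (N : nat) (R0 : R) (u : vec N -> R) :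
  leq 2 N = true -> R0 > 0 ->
  continuous_on_ball R0 u ->
  (forall x, inBall R0 x -> u x > 0) ->
  separable R0 u ->
  ~ radially_symmetric R0 u ->
  exists M : mat N, orthogonal M /\
    (forall a h, 0 < a <= R0 -> -a <= h <= a ->
       forall x y : vec N, norm x = a -> norm y = a ->
         coord x (subn N 1) = h -> coord y (subn N 1) = h ->
         u_M u M x = u_M u M y) /\
    (forall a, 0 < a <= R0 ->
       forall t1 t2, PI / 2 <= t1 -> t1 <= t2 -> t2 <= 3 * PI / 2 ->
         u_M u M (@circ_pt N a t2) <= u_M u M (@circ_pt N a t1)).
Proof.
move=> HN HR0 Hc Hu Hs Hnr.
have [v [Hv [HGv HnGv]]] := nonradial_V Hs Hnr.
have [p [Hp [Hpos Hzero]]] := main_dir Hc Hs Hv HnGv.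
have HN' : (2 <= N)%nat by rewrite HN.
have Hnp := np_pos Hp.
exists (@Mh N HN' p); split; first exact: orth_M.
split.
- move=> a h Ha Hh x y Hx Hy Hcx Hcy.
  rewrite /u_M !tapply_M.
  set X := reflect_e (hv HN' p) x; set Y := reflect_e (hv HN' p) y.
  have HXX : dot X X = a * a by rewrite /X refl_dot; apply: norm_dot_eq.
  have HYY : dot Y Y = a * a by rewrite /Y refl_dot; apply: norm_dot_eq.
  have HXb : inBall R0 X by rewrite /inBall /X norm_refl Hx; lra.
  have HYb : inBall R0 Y by rewrite /inBall /Y norm_refl Hy; lra.
  have HpX : dot p X = np p * h.
    have E := coord_kl HN' x; rewrite Hcx in E; rewrite /X dot_p_refl // E //.
  have HpY : dot p Y = np p * h.
    have E := coord_kl HN' y; rewrite Hcy in E; rewrite /Y dot_p_refl // E //.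
  case: (classic (X = Y)) => [->|Hne] //.
  have Hnz1 := nz_of_neq Hne.
  have Hnz2 : nz (vsub Y X) by apply: nz_of_neq => E; apply: Hne.
  have G1 := Hzero _ Hnz1 ltac:(rewrite dot_subr; lra).
  have G2 := Hzero _ Hnz2 ltac:(rewrite dot_subr; lra).
  have [S1 P1] := @refl_swap N X Y ltac:(rewrite HXX HYY; reflexivity) Hnz1.
  have [S2 P2] := @refl_swap N Y X ltac:(rewrite HXX HYY; reflexivity) Hnz2.
  have U1 := G1 X HXb P1; rewrite S1 in U1.
  have U2 := G2 Y HYb P2; rewrite S2 in U2.
  lra.
- move=> a Ha t1 t2 H1 H12 H2.
  rewrite /u_M !tapply_M.
  case: (Req_dec t1 t2) => [->|Hne]; first lra.
  have Hsin : sin t2 < sin t1 by apply: sin_decreasing_1; lra.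
  set Z1 := reflect_e (hv HN' p) (@circ_pt N a t1).
  set Z2 := reflect_e (hv HN' p) (@circ_pt N a t2).
  have HZ1 : dot Z1 Z1 = a * a by rewrite /Z1 refl_dot circ_dot.
  have HZ2 : dot Z2 Z2 = a * a by rewrite /Z2 refl_dot circ_dot.
  have HZ1b : inBall R0 Z1.
    rewrite /inBall /norm HZ1 sqrt_square; lra.
  have Hd : 0 < dot p (vsub Z1 Z2).
    rewrite dot_subr /Z1 /Z2 !dot_p_refl // !(circ_kl HN').
    have : 0 < np p * a * (sin t1 - sin t2).
      apply: Rmult_lt_0_compat; [apply: Rmult_lt_0_compat|]; lra.
    lra.
  have Hnz := nz_of_dot (Rgt_not_eq _ _ Hd).
  have G1 := Hpos _ Hd.
  have [S1 P1] := @refl_swap N Z1 Z2 ltac:(rewrite HZ1 HZ2; reflexivity) Hnz.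
  have := G1 Z1 HZ1b P1; rewrite S1; lra.
Qed.
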